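(* Let $W=\sum_{j\in[n]}p_j\mathrm B(\varepsilon_j)\in\mathbb B_n^*$ be a degradation of $Q=\sum_{i\in[m]}q_i\mathrm B(\sigma_i)\in\mathbb B_m$, where $(p_j)$ and $(q_i)$ are probability vectors and $\varepsilon_1,\dots,\varepsilon_n,\sigma_1,\dots,\sigma_m\in[0,1/2]$. Then $W$ is a $2n$-P-degradation of $Q$ if and only if there is a 1-matrix $(k_{i,j})_{m\times n}$ of pattern $(q_1,\dots,q_m;p_1,\dots,p_n)$ such that $$\sum_{i\in[m]}k_{i,j}\sigma_i=p_j\varepsilon_j\qquad\text{for every } j\in[n].$$
   Context: A BIDMC $W$ has input uniform on $\{0,1\}$, discrete output alphabet $\mathcal Y$ and transition probabilities $\Pr(y\mid x)$; its LR-profile is $P_W(\varepsilon)=\Pr\big(\mathcal L_W(y)=\varepsilon/(1-\varepsilon)\big)$ with $\mathcal L_W(\hat y)=\Pr(y=\hat y\mid x=0)/\Pr(y=\hat y\mid x=1)$, and $W\cong W'$ if LR-profiles coincide; channel identities are up to $\cong$. $W'\preccurlyeq W$ if there is a channel $T$ from the output alphabet of $W$ to that of $W'$ with $\Pr(y'\mid x'=a)=\sum_{y}\Pr(y\mid x=a)T(y'\mid y)$. $\mathrm B(\varepsilon)$ is the BSC with crossover probability $\varepsilon$; $\sum_iq_iW_i$ denotes the random switching channel (use $W_i$ with probability $q_i$ independently of the input and output the index $i$ along with the output). $\mathbb B_n$ is the set of BIDMCs equivalent to $\sum_{i\in[n]}p_i\mathrm B(\varepsilon_i)$ for a probability vector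 $(p_i)$ and $\varepsilon_i\in[0,1]$; $\mathbb B_n^*=\mathbb B_n\setminus\mathbb B_{n-1}$. $P_\epsilon(W)=\frac12\sum_{y}\min\{\Pr(y\mid x=0),\Pr(y\mid x=1)\}$ (for $\sum_ip_i\mathrm B(\varepsilon_i)$ with $\varepsilon_i\in[0,1/2]$ it equals $\sum_ip_i\varepsilon_i$). For a symmetric BIDMC $Q$ and $n\ge1$, $W$ is a $2n$-P-degradation of $Q$ ($W\preccurlyeq_{\mathrm P}Q$) if $W\in\mathbb B_n$, $W\preccurlyeq Q$ and $P_\epsilon(W)=\min\{P_\epsilon(W'):W'\in\mathbb B_n,\ W'\preccurlyeq Q\}$. A 1-matrix of pattern $(q_1,\dots,q_m;p_1,\dots,p_n)$ is a matrix $(k_{i,j})_{m\times n}$ with $k_{i,j}\ge0$, $\sum_{j}k_{i,j}=q_i$ for all $i$ and $\sum_{i}k_{i,j}=p_j$ for all $j$. *)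

(* Defs.v *)
From mathcomp Require Import all_boot all_order all_algebra.
From mathcomp Require Import reals.
Set Implicit Arguments. Unset Strict Implicit. Unset Printing Implicit Defensive.
Import Order.TTheory GRing.Theory Num.Theory.
Local Open Scope ring_scope.

(* A BIDMC with input alphabet {0,1} (0 = false, 1 = true) and finite output
   alphabet Y, given by its transition probabilities W x y = Pr(y | x). *)
Definition chan (R : realType) (Y : finType) := bool -> Y -> R.

Definition is_chan (R : realType) (Y : finType) (W : chan R Y) : Prop :=
  (forall x y, 0 <= W x y) /\ (forall x, \sum_(y : Y) W x y = 1).

Definition degraded (R : realType) (Y' Y : finType) (W' : chan R Y') (W : chan R Y) : Prop :=
  exists T : Y -> Y' -> R,
    [/\ (forall y y', 0 <= T y y'),
        (forall y, \sum_(y' : Y') T y y' = 1) &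
        (forall a y', W' a y' = \sum_(y : Y) W a y * T y y')].

(* LR-profile under uniform input: P_W(e) = Pr(L_W(y) = e/(1-e)).
   L_W(y) = W(y|0)/W(y|1) = e/(1-e)  iff  W(y|0) = e (W(y|0)+W(y|1))
   (with e = 1 corresponding to L_W(y) = +oo); outputs of zero probability
   are ignored. *)
Definition lr_profile (R : realType) (Y : finType) (W : chan R Y) (e : R) : R :=
  2^-1 * \sum_(y : Y | (0 < W false y + W true y)
                       && (W false y / (W false y + W true y) == e))
           (W false y + W true y).

Definition chan_equiv (R : realType) (Y Y' : finType) (W : chan R Y) (W' : chan R Y') : Prop :=
  forall e : R, lr_profile W e = lr_profile W' e.

Definition bsc (R : realType) (eps : R) (x y : bool) : R :=
  if x == y then 1 - eps else eps.

Definition switch (R : realType) (n : nat) (p eps : 'I_n -> R) : chan R ('I_n * bool)%type :=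
  fun x iy => p iy.1 * bsc (eps iy.1) x iy.2.

Definition prob_vec (R : realType) (n : nat) (p : 'I_n -> R) : Prop :=
  (forall i, 0 <= p i) /\ \sum_(i < n) p i = 1.

Definition in_B (R : realType) (n : nat) (Y : finType) (W : chan R Y) : Prop :=
  exists p eps : 'I_n -> R,
    [/\ prob_vec p, (forall i, 0 <= eps i <= 1) & chan_equiv W (switch p eps)].

Definition in_Bstar (R : realType) (n : nat) (Y : finType) (W : chan R Y) : Prop :=
  in_B n W /\ ~ in_B n.-1 W.

Definition Pe (R : realType) (Y : finType) (W : chan R Y) : R :=
  2^-1 * \sum_(y : Y) Num.min (W false y) (W true y).

Definition P_degradation (R : realType) (n : nat) (Y Z : finType)
    (W : chan R Y) (Q : chan R Z) : Prop :=
  [/\ in_B n W, degraded W Q &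
      forall (Y' : finType) (W' : chan R Y'),
        is_chan W' -> in_B n W' -> degraded W' Q -> Pe W <= Pe W'].

Definition one_matrix (R : realType) (m n : nat) (q : 'I_m -> R) (p : 'I_n -> R)
    (k : 'M[R]_(m, n)) : Prop :=
  [/\ (forall i j, 0 <= k i j),
      (forall i, \sum_(j < n) k i j = q i) &
      (forall j, \sum_(i < m) k i j = p j)].

(* Main.v *)
Require Import Defs.
From mathcomp Require Import all_boot all_order all_algebra.
From mathcomp Require Import reals ring lra.
Import Order.TTheory GRing.Theory Num.Theory.
Local Open Scope ring_scope.
Set Implicit Arguments. Unset Strict Implicit.

Section H.
Variable R : realType.

Lemma sum_pair (I J : finType) (F : I * J -> R) :
  \sum_(y : I * J) F y = \sum_(i : I) \sum_(j : J) F (i, j).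
Proof. by rewrite pair_big /=; apply: eq_bigr => -[i j]. Qed.

Lemma sum_bool (F : bool -> R) : \sum_(b : bool) F b = F true + F false.
Proof. by rewrite big_bool. Qed.

Lemma min_sum (Y : finType) (a b T : Y -> R) : (forall y, 0 <= T y) ->
  \sum_y Num.min (a y) (b y) * T y <= Num.min (\sum_y a y * T y) (\sum_y b y * T y).
Proof.
move=> T0; rewrite le_min; apply/andP; split; apply: ler_sum => y _;
  apply: ler_wpM2r => //; rewrite ge_min lexx ?orbT //.
Qed.

Lemma bsc_sum (e : R) x : \sum_(b : bool) bsc e x b = 1.
Proof. rewrite sum_bool /bsc; case: x => /=; rewrite addrC ?subrK ?addrNK //.
by rewrite addrC subrK. Qed.

Lemma bsc_sumx (e : R) b : \sum_(x : bool) bsc e x b = 1.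
Proof. rewrite sum_bool /bsc; case: b => /=; rewrite ?subrK ?addrNK //.
by rewrite addrC subrK. Qed.

Lemma min_bsc (c e : R) b : 0 <= c -> 0 <= e <= 2^-1 ->
  Num.min (c * bsc e false b) (c * bsc e true b) = c * e.
Proof.
move=> c0 /andP[e0 e2].
have h : c * e <= c * (1 - e).
  apply: ler_wpM2l => //. 
  lra.
rewrite /bsc; case: b => /=; [exact: min_l | exact: min_r].
Qed.

Lemma Pe_switch n (p eps : 'I_n -> R) : (forall j, 0 <= p j) ->
  (forall j, 0 <= eps j <= 2^-1) -> Pe (switch p eps) = \sum_j p j * eps j.
Proof.
move=> p0 e0; rewrite /Pe sum_pair.
under eq_bigr => j _ do (under eq_bigr => b _ do rewrite /switch /= min_bsc //).
rewrite big_distrr /=; apply: eq_bigr => j _; rewrite big_bool /=.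
by field.
Qed.

Lemma bsc_ge0 (e : R) x y : 0 <= e <= 1 -> 0 <= bsc e x y.
Proof. move=> /andP[e0 e1]; rewrite /bsc; case: (x == y) => //; lra. Qed.

Lemma dp (Y Y' : finType) (Q : chan R Y) (W : chan R Y') :
  (forall x y, 0 <= Q x y) -> degraded W Q -> Pe Q <= Pe W.
Proof.
move=> Q0 [T [T0 T1 TW]]; rewrite /Pe ler_wpM2l ?invr_ge0 ?ler0n //.
have -> : \sum_y Num.min (Q false y) (Q true y) =
          \sum_y \sum_y' Num.min (Q false y) (Q true y) * T y y'.
  by apply: eq_bigr => y _; rewrite -big_distrr /= T1 mulr1.
rewrite exchange_big /=; apply: ler_sum => y' _; rewrite !TW.
exact: (min_sum (fun y => Q false y) (fun y => Q true y) (fun y => T0 y y')).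
Qed.
End H.
Unset Implicit Arguments.

Theorem theorem2 (R : realType) (n m : nat)
    (p eps : 'I_n -> R) (q sigma : 'I_m -> R) :
  prob_vec p -> prob_vec q ->
  (forall j, 0 <= eps j <= 2^-1) ->
  (forall i, 0 <= sigma i <= 2^-1) ->
  in_Bstar n (switch p eps) ->
  degraded (switch p eps) (switch q sigma) ->
  (P_degradation n (switch p eps) (switch q sigma) <->
   exists k : 'M[R]_(m, n),
     one_matrix q p k /\
     forall j : 'I_n, \sum_(i < m) k i j * sigma i = p j * eps j).
Proof.
case: n p eps => [|n] p eps.
  by move=> [_ ]; rewrite big_ord0 => /eqP; rewrite eq_sym oner_eq0.
move=> [p0 p1] [q0 q1] e0 s0 [inW _] deg.
set s := \sum_i q i * sigma i.
have s01 : forall i, 0 <= sigma i <= 1.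
  by move=> i; have := s0 i; move=> /andP[a b]; apply/andP; split => //; lra.
have Q0 : forall x y, 0 <= switch q sigma x y.
  by move=> x [i b]; rewrite /switch mulr_ge0 // bsc_ge0.
have PeQ : Pe (switch q sigma) = s by exact: Pe_switch.
have PeW : Pe (switch p eps) = \sum_j p j * eps j by exact: Pe_switch.
split.
2: { case=> k [[k0 krow kcol] kj]; split => //.
  move=> Y' W' _ _ dW'; rewrite PeW; apply: le_trans (dp Q0 dW'); rewrite PeQ.
  suff -> : \sum_j p j * eps j = s by [].
  under eq_bigr do rewrite -kj.
  rewrite exchange_big /=; apply: eq_bigr => i _; by rewrite -big_distrl /= krow. }
case=> _ _ Hmin.
have sb : 0 <= s <= 2^-1.
  apply/andP; split; first by apply: sumr_ge0 => i _; rewrite mulr_ge0 //; case/andP: (s0 i).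
  apply: le_trans (_ : \sum_i q i * 2^-1 <= _).
    by apply: ler_sum => i _; apply: ler_wpM2l => //; case/andP: (s0 i).
  by rewrite -big_distrl /= q1 mul1r.
have Hle : \sum_j p j * eps j <= s.
  pose j0 : 'I_n.+1 := ord0.
  have [p' p'def] : {p' : 'I_n.+1 -> R | p' = fun j => if j == j0 then 1 else 0} by eexists.
  pose e' := fun j : 'I_n.+1 => s.
  have p'0 : forall j, 0 <= p' j by move=> j; rewrite p'def; case: ifP.
  have p'1 : \sum_j p' j = 1.
    by rewrite p'def (bigD1 j0) //= big1 ?addr0 // => j /negbTE ->.
  have e'0 : forall j, 0 <= e' j <= 2^-1 by [].
  have e'1 : forall j, 0 <= e' j <= 1 by move=> j; rewrite /e'; case/andP: sb => a b; apply/andP; split => //; lra.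
  rewrite -PeW; apply: le_trans (Hmin _ (switch p' e') _ _ _) _.
  - split; first by move=> x [j b]; rewrite /switch mulr_ge0 // bsc_ge0.
    move=> x; rewrite sum_pair -[RHS]p'1; apply: eq_bigr => j _.
    by rewrite /switch /= -big_distrr /= bsc_sum mulr1.
  - by exists p', e'; split => //; split.
  - exists (fun (y : 'I_m * bool) (z : 'I_n.+1 * bool) => p' z.1 * (if y.2 == z.2 then 1 else 0)).
    split.
    + by move=> y z; rewrite mulr_ge0 //; case: ifP.
    + move=> [i b]; rewrite sum_pair -[RHS]p'1; apply: eq_bigr => j _.
      by rewrite /= -big_distrr /= big_bool; case: b => /=; ring.
    + move=> a [j b']; rewrite /switch /= sum_pair.
      have E i : \sum_b q i * bsc (sigma i) a b * (p' j * (if b == b' then 1 else 0))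
                 = p' j * (q i * bsc (sigma i) a b').
        by rewrite big_bool; case: b' => /=; ring.
      under eq_bigr do rewrite E.
      rewrite -big_distrr /=; congr (_ * _).
      rewrite /bsc; case: (a == b') => //.
      rewrite (eq_bigr (fun i => q i - q i * sigma i)); last by move=> i _; rewrite mulrBr mulr1.
      by rewrite sumrB q1.
  - by rewrite Pe_switch // /e' -big_distrl /= p'1 mul1r.
case: deg => T [T0 T1 TW].
pose S i j := \sum_(b : bool) \sum_(b' : bool) T (i, b) (j, b').
pose k := \matrix_(i < m, j < n.+1) (2^-1 * q i * S i j).
have S0 i j : 0 <= S i j by apply: sumr_ge0 => b _; apply: sumr_ge0 => b' _.
have k0 i j : 0 <= k i j by rewrite mxE !mulr_ge0 // invr_ge0 ler0n.
have krow i : \sum_j k i j = q i.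
  under eq_bigr do rewrite mxE.
  rewrite -big_distrr /= /S exchange_big /=.
  have -> : \sum_b \sum_j \sum_b' T (i, b) (j, b') = 2.
    rewrite big_bool -!sum_pair !T1; done.
  by field.
have kcol j : \sum_i k i j = p j.
  have E x b' : p j * bsc (eps j) x b' =
     \sum_y q y.1 * bsc (sigma y.1) x y.2 * T y (j, b') := TW x (j, b').
  have H2 : 2 * p j = \sum_i q i * S i j.
    have -> : 2 * p j = \sum_(x : bool) \sum_(b' : bool) p j * bsc (eps j) x b'.
      by rewrite !big_bool /bsc /=; ring.
    rewrite (eq_bigr (fun x => \sum_(b' : bool) \sum_y q y.1 * bsc (sigma y.1) x y.2 * T y (j, b'))); last first.
      by move=> x _; apply: eq_bigr => b' _; exact: E.
    rewrite !big_bool !sum_pair -!big_split /=; apply: eq_bigr => i _.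
    by rewrite /S !big_bool /bsc /=; ring.
  under eq_bigr do rewrite mxE.
  rewrite (eq_bigr (fun i => 2^-1 * (q i * S i j))); last by move=> i _; rewrite mulrA.
  by rewrite -big_distrr /= -H2; field.
have E j x b' : p j * bsc (eps j) x b' =
     \sum_y q y.1 * bsc (sigma y.1) x y.2 * T y (j, b') := TW x (j, b').
have G j b' : \sum_i \sum_b q i * sigma i * T (i, b) (j, b') <= p j * eps j.
  rewrite -(min_bsc b' (p0 j) (e0 j)) (E j false b') (E j true b').
  apply: le_trans (min_sum (fun y => q y.1 * bsc (sigma y.1) false y.2)
     (fun y => q y.1 * bsc (sigma y.1) true y.2) (fun y => T0 y (j, b'))).
  rewrite sum_pair; apply: ler_sum => i _; apply: ler_sum => b _ /=.
  by rewrite min_bsc.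
have Hk j : \sum_i k i j * sigma i = 2^-1 * (\sum_i \sum_b q i * sigma i * T (i, b) (j, true)
     + \sum_i \sum_b q i * sigma i * T (i, b) (j, false)).
  rewrite -big_split big_distrr /=; apply: eq_bigr => i _.
  by rewrite mxE /S !big_bool /=; ring.
have Hle' j : \sum_i k i j * sigma i <= p j * eps j.
  by rewrite Hk; have := G j true; have := G j false; lra.
have tot : \sum_j \sum_i k i j * sigma i = s.
  by rewrite exchange_big; apply: eq_bigr => i _; rewrite -big_distrl /= krow.
have D0 : forall j, 0 <= p j * eps j - \sum_i k i j * sigma i.
  by move=> j; rewrite subr_ge0 Hle'.
have Dsum : \sum_j (p j * eps j - \sum_i k i j * sigma i) = 0.
  apply/eqP; rewrite eq_le sumr_ge0 ?andbT; last by move=> j _; exact: D0.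
  by rewrite sumrB tot subr_le0 Hle.
exists k; split; first by split.
have Z := psumr_eq0P (P := xpredT) (fun j _ => D0 j) Dsum.
move=> j; have := Z j isT.
by move/eqP; rewrite subr_eq0 => /eqP ->.
Qed.
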